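(* Let $\epsilon>0$, let $q$ be a positive integer, and let $\Lambda_\epsilon$ be an $\epsilon$-lattice. There is a (randomized) function $Q_{\epsilon,q}:\mathbb{R}^d\to\{0,1\}^b$, with $b=d\log q$, mapping each $\mathbf{x}\in\mathbb{R}^d$ to a string $Q_{\epsilon,q}(\mathbf{x})$ which specifies a subset $\Lambda'_\epsilon\subset\Lambda_\epsilon$ with the following properties: there exists $\mathbf{z}\in\Lambda'_\epsilon$ such that $\mathbf{z}$ is an unbiased estimator of $\mathbf{x}$ (i.e. $\mathbb{E}[\mathbf{z}]=\mathbf{x}$) with $\|\mathbf{z}-\mathbf{x}\|<7\epsilon$, and for all $\mathbf{w}\in\Lambda'_\epsilon\setminus\{\mathbf{z}\}$, $\|\mathbf{z}-\mathbf{w}\|\ge 2q\epsilon$.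
   Context: $\|\cdot\|$ is a fixed one of the $\ell_1,\ell_2,\ell_\infty$ norms. A lattice is the set of integer combinations of a basis of $\mathbb{R}^d$. Its packing radius $r_p$ is the supremum of $r$ such that balls of radius $r$ around distinct lattice points are disjoint; its cover radius $r_c$ is the infimum of $r$ such that balls of radius $r$ around lattice points cover $\mathbb{R}^d$. An $\epsilon$-lattice is a lattice with $\epsilon=r_p\le r_c\le3\epsilon$. *)

(* Defs.v *)
From HB Require Import structures.
From mathcomp Require Import all_boot all_order all_algebra.
From mathcomp Require Import boolp classical_sets reals.
Set Implicit Arguments. Unset Strict Implicit. Unset Printing Implicit Defensive.
Import Order.TTheory GRing.Theory Num.Theory.
Local Open Scope classical_set_scope.
Local Open Scope ring_scope.

Inductive normKind := L1 | L2 | Linf.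

Definition vnorm {R : realType} (nk : normKind) {d : nat} (v : 'rV[R]_d) : R :=
  match nk with
  | L1 => \sum_(i < d) `|v ord0 i|
  | L2 => Num.sqrt (\sum_(i < d) v ord0 i ^+ 2)
  | Linf => \big[Num.max/0]_(i < d) `|v ord0 i|
  end.

Definition lattice {R : realType} {d : nat} (B : 'M[R]_d) : set 'rV[R]_d :=
  [set z | exists k : 'rV[int]_d, z = map_mx (fun n : int => n%:~R) k *m B].

Definition packing_radius {R : realType} (nk : normKind) {d : nat} (B : 'M[R]_d) : R :=
  sup [set r : R | 0 < r /\
    forall u v : 'rV[R]_d, lattice B u -> lattice B v -> u != v ->
      forall y : 'rV[R]_d, ~ (vnorm nk (y - u) <= r /\ vnorm nk (y - v) <= r)].

Definition cover_radius {R : realType} (nk : normKind) {d : nat} (B : 'M[R]_d) : R :=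
  inf [set r : R | 0 <= r /\
    forall y : 'rV[R]_d, exists u, lattice B u /\ vnorm nk (y - u) <= r].

Definition eps_lattice {R : realType} (nk : normKind) {d : nat} (B : 'M[R]_d) (eps : R) : Prop :=
  B \in unitmx /\ packing_radius nk B = eps /\
  eps <= cover_radius nk B /\ cover_radius nk B <= 3 * eps.

(* Number of bits: b = ceil(d log2 q), the least b with q^d <= 2^b. *)
Definition nbits (d q : nat) : nat := up_log 2 (q ^ d).

(* A finitely supported probability distribution given as a weighted list. *)
Definition is_distr {T : eqType} {R : realType} (s : seq (R * T)) : Prop :=
  (forall o, o \in s -> 0 <= o.1) /\ \sum_(o <- s) o.1 = 1.

(* Main.v *)
Require Import Defs.
From HB Require Import structures.
From mathcomp Require Import all_boot all_order all_algebra.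
From mathcomp Require Import boolp classical_sets reals.
From mathcomp Require Import topology normedtype derive.
From mathcomp Require Import ring lra zify.
Import Order.TTheory GRing.Theory Num.Theory.
Import numFieldNormedType.Exports.
Local Open Scope classical_set_scope.
Local Open Scope ring_scope.
Set Implicit Arguments. Unset Strict Implicit.

Section VN.
Variable R : realType.
Variable d : nat.
Implicit Types (u v w : 'rV[R]_d).

Lemma CS (a b : 'I_d -> R) :
  (\sum_i a i * b i) ^+ 2 <= (\sum_i a i ^+ 2) * (\sum_i b i ^+ 2).
Proof.
set A := \sum_i a i ^+ 2; set B := \sum_i b i ^+ 2; set C := \sum_i a i * b i.
have A0 : 0 <= A by apply: sumr_ge0 => i _; exact: sqr_ge0.
have B0 : 0 <= B by apply: sumr_ge0 => i _; exact: sqr_ge0.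
have [A0'|Anz] := eqVneq A 0.
  have ha : forall i, a i = 0.
    move=> i; apply/eqP; rewrite -sqrf_eq0; apply/eqP.
    by move: A0'; rewrite /A; move/psumr_eq0P => H; apply: H => // j _; exact: sqr_ge0.
  have -> : C = 0 by rewrite /C big1 // => i _; rewrite ha mul0r.
  by rewrite A0' expr0n /= mul0r.
have Ap : 0 < A by rewrite lt_def Anz A0.
pose t := C / A.
have H : 0 <= \sum_i (t * a i - b i) ^+ 2 by apply: sumr_ge0 => i _; exact: sqr_ge0.
have E : \sum_i (t * a i - b i) ^+ 2 = t ^+ 2 * A - 2 * t * C + B.
  rewrite /A /B /C mulr_sumr mulr_sumr -sumrB -big_split /=.
  by apply: eq_bigr => i _; ring.
rewrite E /t in H.
have H2 : 0 <= B - C ^+ 2 / A.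
  by move: H; congr (_ <= _); field; exact: Anz.
rewrite subr_ge0 ler_pdivrMr // in H2.
by rewrite mulrC.
Qed.

Lemma CS_abs (a b : 'I_d -> R) :
  `|\sum_i a i * b i| <= Num.sqrt (\sum_i a i ^+ 2) * Num.sqrt (\sum_i b i ^+ 2).
Proof.
have A0 : 0 <= \sum_i a i ^+ 2 by apply: sumr_ge0 => i _; exact: sqr_ge0.
rewrite -sqrtrM // -sqrtr_sqr ler_sqrt; first exact: CS.
by apply: mulr_ge0 => //; apply: sumr_ge0 => i _; exact: sqr_ge0.
Qed.

Lemma vnorm_ge0 nk v : 0 <= vnorm nk v.
Proof.
case: nk => /=; first by apply: sumr_ge0 => i _.
  exact: sqrtr_ge0.
by apply: bigmax_ge_id.
Qed.

Lemma vnormZ nk (c : R) v : vnorm nk (c *: v) = `|c| * vnorm nk v.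
Proof.
case: nk => /=.
- rewrite mulr_sumr; apply: eq_bigr => i _; by rewrite mxE normrM.
- rewrite -sqrtr_sqr -sqrtrM ?sqr_ge0 // mulr_sumr; congr Num.sqrt.
  by apply: eq_bigr => i _; rewrite mxE exprMn.
- elim/big_ind2: _ => //.
  + by rewrite mulr0.
  + move=> x1 x2 y1 y2 -> ->.
    by rewrite maxr_pMr.
  + by move=> i _; rewrite mxE normrM.
Qed.

Lemma vnormN nk v : vnorm nk (- v) = vnorm nk v.
Proof. by rewrite -scaleN1r vnormZ normrN1 mul1r. Qed.

Lemma vnormB nk u v : vnorm nk (u - v) = vnorm nk (v - u).
Proof. by rewrite -vnormN opprB. Qed.

Lemma coord_le nk v i : `|v ord0 i| <= vnorm nk v.
Proof.
case: nk => /=.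
- rewrite (bigD1 i) //= lerDl; by apply: sumr_ge0 => j _.
- rewrite -sqrtr_sqr ler_sqrt; last by apply: sumr_ge0 => j _; exact: sqr_ge0.
  rewrite (bigD1 i) //= lerDl; by apply: sumr_ge0 => j _; exact: sqr_ge0.
- exact: le_bigmax.
Qed.

Lemma vnormD nk u v : vnorm nk (u + v) <= vnorm nk u + vnorm nk v.
Proof.
case: nk => /=.
- rewrite -big_split /=; apply: ler_sum => i _; rewrite mxE; exact: ler_normD.
- set A := \sum_i u ord0 i ^+ 2; set B := \sum_i v ord0 i ^+ 2.
  have A0 : 0 <= A by apply: sumr_ge0 => i _; exact: sqr_ge0.
  have B0 : 0 <= B by apply: sumr_ge0 => i _; exact: sqr_ge0.
  rewrite -(ger0_norm (addr_ge0 (sqrtr_ge0 A) (sqrtr_ge0 B))) -sqrtr_sqr ler_sqrt;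
    last exact: sqr_ge0.
  have E : \sum_i (u + v) ord0 i ^+ 2 = A + B + 2 * \sum_i u ord0 i * v ord0 i.
    rewrite /A /B mulr_sumr -!big_split /=; apply: eq_bigr => i _; rewrite mxE; ring.
  rewrite E sqrrD !sqr_sqrtr //.
  have -> : A + Num.sqrt A * Num.sqrt B *+ 2 + B = (A + B) + 2 * (Num.sqrt A * Num.sqrt B) by rewrite mulr2n mulrDl mul1r; ring.
  rewrite lerD2l ler_pM2l // -sqrtrM //.
  apply: le_trans (ler_norm _) _.
  rewrite sqrtrM //; exact: (CS_abs (fun i => u ord0 i) (fun i => v ord0 i)).
- apply: bigmax_le.
  + by apply: addr_ge0; apply: bigmax_ge_id.
  + move=> i _; rewrite mxE; apply: le_trans (ler_normD _ _) _.
    by apply: lerD; apply: le_bigmax.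
Qed.

Definition dot u v : R := \sum_(i < d) u ord0 i * v ord0 i.

Lemma dot_abs u w : `|dot u w| <= \sum_i `|u ord0 i| * `|w ord0 i|.
Proof.
rewrite /dot; apply: le_trans (ler_norm_sum _ _ _) _.
by apply: ler_sum => i _; rewrite normrM.
Qed.

Lemma dual nk u : (exists i, u ord0 i != 0) ->
  exists v, vnorm nk v <= 1 /\ 0 < dot u v /\
    forall w, `|dot u w| <= dot u v * vnorm nk w.
Proof.
move=> [i ui].
have ui0 : 0 < `|u ord0 i| by rewrite normr_gt0.
case: nk.
- have [i0 _ Hm] := @eq_bigmax _ R 'I_d 0 i predT (fun k => `|u ord0 k|) isT (fun k _ => normr_ge0 _).
  set M := \big[_/_]_(_ | _) _ in Hm.
  have HM : forall k, `|u ord0 k| <= `|u ord0 i0|.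
    by move=> k; rewrite -Hm; apply: le_bigmax.
  exists (\row_k (if k == i0 then Num.sg (u ord0 i0) else 0)).
  have Edot : dot u (\row_k (if k == i0 then Num.sg (u ord0 i0) else 0)) = `|u ord0 i0|.
    rewrite /dot (bigD1 i0) //= big1 ?addr0.
      by rewrite mxE eqxx mulrC -normrEsg.
    by move=> k /negbTE kn; rewrite mxE kn mulr0.
  rewrite Edot; split; last split.
  + rewrite /= (bigD1 i0) //= big1 ?addr0.
      by rewrite mxE eqxx normr_sg; case: (_ != 0).
    by move=> k /negbTE kn; rewrite mxE kn normr0.
  + exact: lt_le_trans ui0 (HM i).
  + move=> w; apply: le_trans (dot_abs u w) _; rewrite /= mulr_sumr.
    by apply: ler_sum => k _; apply: ler_wpM2r => //.
- set S := \sum_k u ord0 k ^+ 2.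
  have S0 : 0 < S.
    rewrite /S (bigD1 i) //=; apply: (@lt_le_trans _ _ (u ord0 i ^+ 2)).
      by rewrite exprn_even_gt0 // ui.
    by rewrite lerDl; apply: sumr_ge0 => k _; exact: sqr_ge0.
  have sS0 : 0 < Num.sqrt S by rewrite sqrtr_gt0.
  have Edot : dot u ((Num.sqrt S)^-1 *: u) = Num.sqrt S.
    rewrite /dot.
    under eq_bigr do rewrite mxE mulrCA -expr2.
    rewrite -mulr_sumr -/S -{2}(sqr_sqrtr (ltW S0)) expr2 mulrA mulVf ?mul1r //.
    by rewrite gt_eqF.
  exists ((Num.sqrt S)^-1 *: u); rewrite Edot; split; last split => //.
  + by rewrite vnormZ /= -/S ger0_norm ?invr_ge0 ?(ltW sS0) // mulVf // gt_eqF.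
  + move=> w; exact: (CS_abs (fun k => u ord0 k) (fun k => w ord0 k)).
- exists (\row_k Num.sg (u ord0 k)).
  have Edot : dot u (\row_k Num.sg (u ord0 k)) = \sum_k `|u ord0 k|.
    by rewrite /dot; apply: eq_bigr => k _; rewrite mxE mulrC -normrEsg.
  rewrite Edot; split; last split.
  + apply: bigmax_le => // k _; rewrite mxE normr_sg; by case: (_ != 0).
  + rewrite (bigD1 i) //=; apply: (@lt_le_trans _ _ `|u ord0 i|) => //.
    by rewrite lerDl; apply: sumr_ge0 => k _.
  + move=> w; apply: le_trans (dot_abs u w) _; rewrite mulr_suml.
    apply: ler_sum => k _; apply: ler_wpM2l => //.
    exact: (coord_le Linf w k).
Qed.


Lemma packing_sep nk (B : 'M[R]_d) eps : packing_radius nk B = eps ->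
  forall u v, lattice B u -> lattice B v -> u != v -> 2 * eps <= vnorm nk (u - v).
Proof.
move=> Hp u v Lu Lv uv.
rewrite leNgt; apply/negP => Hlt.
set m := vnorm nk (u - v) / 2.
have m0 : 0 <= m by rewrite divr_ge0 ?vnorm_ge0.
pose P := [set r : R | 0 < r /\
    forall u v : 'rV[R]_d, lattice B u -> lattice B v -> u != v ->
      forall y : 'rV[R]_d, ~ (vnorm nk (y - u) <= r /\ vnorm nk (y - v) <= r)].
have ub : ubound P m.
  move=> r [r0 Hr]; rewrite leNgt; apply/negP => mr.
  apply: (Hr u v Lu Lv uv (u + 2^-1 *: (v - u))); split.
  + have -> : u + 2^-1 *: (v - u) - u = 2^-1 *: (v - u) by rewrite addrC addKr.
    by rewrite vnormZ vnormB ger0_norm ?invr_ge0 // mulrC ltW.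
  + have -> : u + 2^-1 *: (v - u) - v = 2^-1 *: (u - v).
      by apply/rowP => k; rewrite !mxE; field.
    by rewrite vnormZ ger0_norm ?invr_ge0 // mulrC ltW.
have : eps <= m.
  rewrite -Hp /packing_radius -/P.
  case: (pselect (P !=set0)) => Pne; first exact: ge_sup.
  by rewrite sup_out // => -[].
rewrite /m => em.
move: em Hlt; rewrite ler_pdivlMr //; lra.
Qed.

Lemma cover_ex nk (B : 'M[R]_d) eps : 0 < eps -> eps <= cover_radius nk B ->
  cover_radius nk B <= 3 * eps ->
  forall y, exists u, lattice B u /\ vnorm nk (y - u) <= 3 * eps + eps / 4.
Proof.
move=> e0 e1 e2 y.
pose C := [set r : R | 0 <= r /\
    forall y : 'rV[R]_d, exists u, lattice B u /\ vnorm nk (y - u) <= r].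
case: (pselect (C !=set0)) => Cne; last first.
  move: e1; rewrite /cover_radius -/C inf_out; first by rewrite leNgt e0.
  by move=> [].
have [r [r0 Hr] rlt] : exists2 r, C r & r < inf C + eps / 4.
  apply: inf_adherent; first by rewrite divr_gt0.
  by split => //; exists 0 => z [].
have [u [Lu Hu]] := Hr y.
exists u; split => //; apply: (le_trans Hu); apply: ltW; apply: (lt_le_trans rlt).
by rewrite lerD2r.
Qed.

End VN.
Section Cont.
Variable R : realType.

Lemma lin_cont n (c : 'I_n -> R) :
  continuous (fun w : 'rV[R]_n => \sum_i w ord0 i * c i).
Proof.
apply: continuous_big; first exact: add_continuous.
move=> i _ w; apply: continuousM; first exact: coord_continuous.
exact: cst_continuous.
Qed.

Lemma quad_cont n m (c : 'I_m -> 'I_n -> R) :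
  continuous (fun w : 'rV[R]_n => \sum_k (\sum_i w ord0 i * c k i) ^+ 2).
Proof.
apply: continuous_big; first exact: add_continuous.
move=> k _ w; rewrite /=.
have -> : (fun w : 'rV[R]_n => (\sum_i w ord0 i * c k i) ^+ 2) =
   (fun w => \sum_i w ord0 i * c k i) \* (fun w => \sum_i w ord0 i * c k i).
  by apply: funext => z /=; rewrite expr2.
by apply: continuousM; apply: lin_cont.
Qed.

Lemma simplex_compact n :
  compact ([set w : 'rV[R]_n | forall i, `[0, 1]%classic (w ord0 i)] `&`
           [set w | \sum_i w ord0 i = 1]).
Proof.
apply: compact_closedI.
  exact: (@rV_compact R n (fun=> `[0, 1]%classic) (fun=> @segment_compact R 0 1)).
have sc : continuous (fun w : 'rV[R]_n => \sum_i w ord0 i).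
  apply: continuous_big; first exact: add_continuous.
  move=> i _; exact: coord_continuous.
exact: (@preimage_closed _ _ (fun w : 'rV[R]_n => \sum_i w ord0 i) [set x | x = 1] (fun w _ => sc w) (@closed_eq R 1)).
Qed.
End Cont.

Section Sep.
Variable R : realType.
Variable d : nat.

Lemma dot_quad (p c : 'rV[R]_d) t :
  dot (p + t *: c) (p + t *: c) = dot p p + 2 * t * dot p c + t ^+ 2 * dot c c.
Proof.
rewrite /dot !mulr_sumr -!big_split /=; apply: eq_bigr => i _; rewrite !mxE; ring.
Qed.

Lemma dotBr (p a : 'rV[R]_d) : dot p (a - p) = dot p a - dot p p.
Proof. rewrite /dot -sumrB; apply: eq_bigr => i _; rewrite !mxE; ring. Qed.

Lemma dotNl (p a : 'rV[R]_d) : dot (- p) a = - dot p a.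
Proof. rewrite /dot -sumrN; apply: eq_bigr => i _; rewrite !mxE; ring. Qed.

Lemma dot_pos (p : 'rV[R]_d) : p != 0 -> 0 < dot p p.
Proof.
move=> pn0.
have [i pi] : exists i, p ord0 i != 0.
  apply/existsP; move: pn0; apply: contraR; rewrite negb_exists => /forallP H.
  by apply/eqP/rowP => i; rewrite mxE; apply/eqP; move: (H i); rewrite negbK.
rewrite /dot (bigD1 i) //=; apply: (@lt_le_trans _ _ (p ord0 i * p ord0 i)).
  by rewrite -expr2 exprn_even_gt0.
by rewrite lerDl; apply: sumr_ge0 => k _; rewrite -expr2 sqr_ge0.
Qed.

Lemma sep n (a : 'I_n.+1 -> 'rV[R]_d) :
  (exists w : 'I_n.+1 -> R, (forall i, 0 <= w i) /\ \sum_i w i = 1 /\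
       \sum_i w i *: a i = 0)
  \/ (exists u, forall i, dot u (a i) < 0).
Proof.
pose Sv (w : 'rV[R]_n.+1) := \sum_i w ord0 i *: a i.
pose F (w : 'rV[R]_n.+1) := \sum_k (\sum_i w ord0 i * a i ord0 k) ^+ 2.
have FE : forall w, F w = dot (Sv w) (Sv w).
  move=> w; rewrite /F /dot; apply: eq_bigr => k _; rewrite expr2.
  by rewrite /Sv summxE; congr (_ * _); apply: eq_bigr => i _; rewrite mxE.
pose A := [set w : 'rV[R]_n.+1 | forall i, `[0, 1]%classic (w ord0 i)] `&`
           [set w | \sum_i w ord0 i = 1].
pose e (j : 'I_n.+1) : 'rV[R]_n.+1 := \row_i (i == j)%:R.
have sum_e : forall j, \sum_i e j ord0 i = 1.
  move=> j; rewrite (bigD1 j) //= big1 ?addr0; first by rewrite mxE eqxx.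
  by move=> i /negbTE ij; rewrite mxE ij.
have A0 : A !=set0.
  exists (e ord0); split; last exact: sum_e.
  move=> i; rewrite /= mxE in_itv /=; by case: (i == ord0); rewrite ?lexx ?ler01.
have [ws wsA wsmin] := compact_EVT_min A0 (@simplex_compact R n.+1)
   (continuous_subspaceT (@quad_cont R n.+1 d (fun k i => a i ord0 k))).
move/set_mem: wsA => [ws01 ws1].
set p := Sv ws.
have [p0|pn0] := eqVneq p 0.
  left; exists (fun i => ws ord0 i); split; last by split.
  by move=> i; move: (ws01 i); rewrite /= in_itv /= => /andP[].
right; exists (- p) => j.
have key : 0 <= dot p (a j - p).
  rewrite leNgt; apply/negP => D0.
  set D := dot p (a j - p) in D0.
  set E := dot (a j - p) (a j - p).
  have E0 : 0 <= E by rewrite /E /dot; apply: sumr_ge0 => i _; rewrite -expr2 sqr_ge0.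
  have ED : 0 < E - 2 * D by lra.
  pose t := - D / (E - 2 * D).
  have t0 : 0 < t by rewrite /t divr_gt0 // oppr_gt0.
  have t1 : t <= 1 by rewrite /t ler_pdivrMr // mul1r; lra.
  pose wt := ws + t *: (e j - ws).
  have wtA : A wt.
    split.
      move=> i; rewrite /wt !mxE /= in_itv /=.
      move: (ws01 i); rewrite /= in_itv /= => /andP[h0 h1].
      have : ((i == j)%:R : R) = 0 \/ ((i == j)%:R : R) = 1 by case: (i == j); [right|left].
      move=> [->|->]; apply/andP; split; nra.
    rewrite /= /wt.
    under eq_bigr do rewrite !mxE.
    rewrite big_split /= -mulr_sumr sumrB ws1.
    by move: (sum_e j); under eq_bigr do rewrite mxE; move=> ->; rewrite subrr mulr0 addr0.
  have Swt : Sv wt = p + t *: (a j - p).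
    rewrite /Sv /wt.
    under eq_bigr do rewrite !mxE scalerDl -scalerA.
    rewrite big_split /= -scaler_sumr; congr (_ + _ *: _).
    under eq_bigr do rewrite scalerBl.
    rewrite sumrB; congr (_ - _).
    rewrite (bigD1 j) //= big1 ?addr0; first by rewrite eqxx scale1r.
    by move=> i /negbTE ij; rewrite ij scale0r.
  have : F ws <= F wt := wsmin wt (mem_set wtA).
  rewrite !FE Swt dot_quad -/p -/D -/E => H.
  have H2 : 0 <= t * (2 * D + t * E) by move: H; rewrite -subr_ge0; congr (_ <= _); ring.
  have H3 : 2 * D + t * E < 0.
    have -> : 2 * D + t * E = (2 * D * (E - 2 * D) - D * E) / (E - 2 * D).
      rewrite /t; field; lra.
    rewrite pmulr_llt0 ?invr_gt0 //; nra.
  by move: H2; rewrite pmulr_rge0 // leNgt H3.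
rewrite dotNl oppr_lt0; move: key; rewrite dotBr subr_ge0 => key.
exact: lt_le_trans (dot_pos pn0) key.
Qed.
End Sep.

Section Main.
Variable R : realType.
Variable d : nat.
Variable nk : normKind.
Variable B : 'M[R]_d.

Definition toR (k : 'rV[int]_d) : 'rV[R]_d := map_mx (fun n : int => n%:~R) k *m B.

Lemma box_bound (Bu : B \in unitmx) (x : 'rV[R]_d) (r : R) : 0 <= r ->
  exists N : nat, forall k : 'rV[int]_d, vnorm nk (toR k - x) < r ->
    forall i, (`|k ord0 i| <= N%:Z)%R.
Proof.
move=> r0.
set Bi := invmx B.
pose M := \sum_i \sum_j (`|x ord0 j| + r) * `|Bi j i|.
have M0 : 0 <= M.
  by apply: sumr_ge0 => i _; apply: sumr_ge0 => j _; apply: mulr_ge0 => //; apply: addr_ge0.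
exists (Num.Def.archi_bound M) => k Hk i.
have Hkr : map_mx (fun n : int => n%:~R) k = toR k *m Bi by rewrite /toR mulmxK.
have E : (k ord0 i)%:~R = \sum_j toR k ord0 j * Bi j i :> R.
  by have := congr1 (fun A : 'rV[R]_d => A ord0 i) Hkr; rewrite !mxE.
have H1 : `|(k ord0 i)%:~R : R| <= M.
  rewrite E; apply: le_trans (ler_norm_sum _ _ _) _.
  apply: (@le_trans _ _ (\sum_j (`|x ord0 j| + r) * `|Bi j i|)); last first.
    rewrite /M [leRHS](bigD1 i) //= lerDl; apply: sumr_ge0 => i' _; apply: sumr_ge0 => j _.
    by apply: mulr_ge0 => //; apply: addr_ge0.
  apply: ler_sum => j _; rewrite normrM; apply: ler_wpM2r => //.
  have h : `|toR k ord0 j - x ord0 j| <= vnorm nk (toR k - x).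
    have := coord_le nk (toR k - x) j; by rewrite mxE [(- x) ord0 j]mxE.
  have -> : toR k ord0 j = x ord0 j + (toR k ord0 j - x ord0 j) by ring.
  apply: le_trans (ler_normD _ _) _; rewrite lerD2l; apply: ltW; exact: le_lt_trans h Hk.
have H2 := archi_boundP M0.
have : (`|k ord0 i|%:~R : R) <= ((Num.Def.archi_bound M)%:Z)%:~R.
  by rewrite intr_norm; apply: ltW; apply: le_lt_trans H1 H2.
by rewrite ler_int.
Qed.

End Main.

Section Main2.
Variable R : realType.
Variable d : nat.
Variable nk : normKind.
Variable B : 'M[R]_d.

Lemma box_enum (N : nat) : exists L : seq 'rV[int]_d,
  forall k : 'rV[int]_d, (forall i, (`|k ord0 i| <= N%:Z)%R) -> k \in L.
Proof.
pose T := {ffun 'I_d -> 'I_(N + N).+1}.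
pose g (f : T) : 'rV[int]_d := \row_i ((nat_of_ord (f i))%:Z - N%:Z)%R.
exists (map g (enum T)).
move=> k Hk.
have H : forall i, (absz (k ord0 i + N%:Z)%R < (N + N).+1)%N.
  move=> i; move: (Hk i) => h; lia.
apply/mapP; exists [ffun i => Ordinal (H i)]; first by rewrite mem_enum.
apply/matrixP => a i; rewrite mxE ffunE /=.
have -> : a = ord0 by apply: val_inj; case: a => [[|]]. move: (Hk i) => h; lia.
Qed.

Lemma dot_lin (u p c : 'rV[R]_d) t : dot u (p + t *: c) = dot u p + t * dot u c.
Proof. rewrite /dot mulr_sumr -big_split /=; apply: eq_bigr => i _; rewrite !mxE; ring. Qed.

Lemma conv_ex (Bu : B \in unitmx) (eps : R) : 0 < eps ->
  eps <= cover_radius nk B -> cover_radius nk B <= 3 * eps ->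
  forall x : 'rV[R]_d, exists s : seq (R * 'rV[int]_d),
    (forall o, o \in s -> 0 <= o.1) /\ \sum_(o <- s) o.1 = 1 /\
    \sum_(o <- s) o.1 *: toR B o.2 = x /\
    (forall o, o \in s -> vnorm nk (toR B o.2 - x) < 7 * eps).
Proof.
move=> e0 c1 c2 x.
have [N HN] := box_bound nk Bu x (r := 7 * eps) (ltW (mulr_gt0 (ltr0n _ 7) e0)).
have [L0 HL0] := box_enum N.
pose L := [seq k <- L0 | vnorm nk (toR B k - x) < 7 * eps].
have inL : forall k, vnorm nk (toR B k - x) < 7 * eps -> k \in L.
  by move=> k h; rewrite mem_filter h /=; apply: HL0; apply: HN.
have cov := cover_ex e0 c1 c2.
have [z0 [[k0 ->] hz0]] := cov x.
have k0L : k0 \in L.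
  apply: inL; rewrite vnormB; apply: (le_lt_trans hz0); lra.
case hs: (size L) => [|n].
  by move/size0nil: hs => hs; move: k0L; rewrite hs.
pose a (i : 'I_n.+1) := toR B (nth 0 L i) - x.
have [[w [w0 [w1 wa]]]|[u Hu]] := sep a.
  exists [seq (w i, nth 0 L i) | i <- enum 'I_n.+1]; split; last split; last split.
  - by move=> o /mapP [i _ ->]; exact: w0.
  - by rewrite big_map big_enum /=.
  - have E : \sum_i w i *: a i = \sum_i w i *: toR B (nth 0 L i) - x.
      rewrite /a; under eq_bigr do rewrite scalerBr.
      by rewrite sumrB -scaler_suml w1 scale1r.
    move: wa; rewrite E => /eqP; rewrite subr_eq0 => /eqP <-.
    by rewrite big_map big_enum /=.
  - move=> o /mapP [i _ ->] /=.
    have : nth 0 L i \in L by rewrite mem_nth // hs.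
    by rewrite mem_filter => /andP[].
exfalso.
have [i ui] : exists i, u ord0 i != 0.
  apply/existsP; apply: contraT; rewrite negb_exists => /forallP H.
  have := Hu ord0; rewrite /dot big1 ?ltxx // => j _.
  by move: (H j); rewrite negbK => /eqP ->; rewrite mul0r.
have [v [v1 [vpos vb]]] := dual nk (ex_intro _ i ui).
pose t := 7 * eps / 2.
have [z [[k ->] hz]] := cov (x + t *: v).
have hz' : vnorm nk (toR B k - x) < 7 * eps.
  have -> : toR B k - x = (toR B k - (x + t *: v)) + t *: v.
    by rewrite opprD addrA subrK.
  apply: le_lt_trans (vnormD _ _ _) _.
  rewrite vnormZ vnormB ger0_norm; last by rewrite /t; lra.
  have : t * vnorm nk v <= t by rewrite ler_piMr // /t; lra.
  rewrite /t; lra.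
have kL := inL k hz'.
have hi : (index k L < n.+1)%N by rewrite -hs index_mem.
have := Hu (Ordinal hi); rewrite /a /= nth_index //.
have -> : toR B k - x = (toR B k - (x + t *: v)) + t *: v.
  by rewrite opprD addrA subrK.
rewrite dot_lin.
have := vb (toR B k - (x + t *: v)).
rewrite ler_norml => /andP [h1 _].
have : dot u v * vnorm nk (toR B k - (x + t *: v)) <= dot u v * (3 * eps + eps / 4).
  by rewrite ler_pM2l // vnormB.
rewrite /t => h2.
nra.
Qed.

End Main2.

Unset Implicit Arguments.

Theorem lemma14 (R : realType) (nk : normKind) (d : nat) (B : 'M[R]_d)
    (eps : R) (q : nat) :
  0 < eps -> (0 < q)%N -> eps_lattice nk B eps ->
  exists (dec : (nbits d q).-tuple bool -> set 'rV[R]_d)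
         (Q : 'rV[R]_d -> seq (R * ((nbits d q).-tuple bool * 'rV[R]_d))),
    forall x : 'rV[R]_d,
      is_distr (Q x) /\
      \sum_(o <- Q x) o.1 *: o.2.2 = x /\
      forall o, o \in Q x -> 0 < o.1 ->
        dec o.2.1 `<=` lattice B /\
        dec o.2.1 o.2.2 /\
        vnorm nk (o.2.2 - x) < 7 * eps /\
        (forall w, dec o.2.1 w -> w != o.2.2 ->
           2 * q%:R * eps <= vnorm nk (o.2.2 - w)).
Proof.
move=> e0 q0 [Bu [Hp [c1 c2]]].
have [S HS] := boolp.choice (conv_ex Bu e0 c1 c2).
pose T := {ffun 'I_d -> 'I_q}.
have hres : forall z : int, (absz (z %% q%:Z)%Z < q)%N.
  move=> z.
  have h1 : (0 <= (z %% q%:Z)%Z)%R by apply: modz_ge0; rewrite eqz_nat -lt0n.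
  have h2 : ((z %% q%:Z)%Z < q%:Z)%R by apply: ltz_pmod; rewrite ltz_nat.
  lia.
pose res (k : 'rV[int]_d) : T := [ffun i => Ordinal (hres (k ord0 i))].
have Hc : (#|T| <= #|{: (nbits d q).-tuple bool}|)%N.
  by rewrite card_ffun !card_ord card_tuple card_bool; exact: up_logP.
pose enc k : (nbits d q).-tuple bool := enum_val (widen_ord Hc (enum_rank (res k))).
have encE : forall k k', enc k = enc k' -> forall i,
    (k ord0 i - k' ord0 i = ((k ord0 i %/ q%:Z)%Z - (k' ord0 i %/ q%:Z)%Z) * q%:Z)%R.
  move=> k k' /enum_val_inj /(congr1 val) /= /val_inj /enum_rank_inj E i.
  have := congr1 (fun f : T => nat_of_ord (f i)) E; rewrite /= !ffunE /= => Ea.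
  have Hm : (k ord0 i %% q%:Z)%Z = (k' ord0 i %% q%:Z)%Z.
    have h1 : (0 <= (k ord0 i %% q%:Z)%Z)%R by apply: modz_ge0; rewrite eqz_nat -lt0n.
    have h2 : (0 <= (k' ord0 i %% q%:Z)%Z)%R by apply: modz_ge0; rewrite eqz_nat -lt0n.
    lia.
  rewrite [in LHS](divz_eq (k ord0 i) q%:Z) [in LHS](divz_eq (k' ord0 i) q%:Z) Hm.
  ring.
pose dec t := [set z | exists k, z = toR B k /\ enc k = t].
exists dec, (fun x => [seq (o.1, (enc o.2, toR B o.2)) | o <- S x]).
move=> x; have [h0 [h1 [h2 h3]]] := HS x.
split; [split|split].
- by move=> o /mapP [o' o'in ->]; exact: h0.
- by rewrite big_map.
- by rewrite big_map.
move=> o /mapP [[w k] okin ->] /= _.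
split; [|split; [|split]].
- by move=> z [k' [-> _]]; exists k'.
- by exists k.
- exact: (h3 _ okin).
move=> z [k' [-> e]] ne.
pose m : 'rV[int]_d := \row_i ((k ord0 i %/ q%:Z)%Z - (k' ord0 i %/ q%:Z)%Z).
have Ediff : toR B k - toR B k' = q%:R *: toR B m.
  rewrite /toR -mulmxBl scalemxAl; congr (_ *m _); apply/matrixP => a i.
  have -> : a = ord0 by apply: val_inj; case: a => [[|]].
  rewrite !mxE.
  have := congr1 (fun z : int => (z%:~R : R)) (encE k k' (esym e) i).
  rewrite /= intrB intrM => ->; rewrite mulrC //.
have Ev := congr1 (vnorm nk) Ediff.
rewrite (_ : vnorm nk _ = vnorm nk (q%:R *: toR B m)); last exact: Ev.
rewrite vnormZ ger0_norm ?ler0n //.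
have mne : toR B m != 0.
  apply: contra ne => /eqP m0; apply/eqP; apply/esym; apply: subr0_eq.
  by rewrite Ediff m0 scaler0.
have L0 : lattice B 0.
  exists 0; apply/matrixP => a i; rewrite !mxE; apply/esym; apply: big1 => j _.
  by rewrite !mxE mul0r.
have Lm : lattice B (toR B m) by exists m.
have := packing_sep Hp Lm L0 mne.
rewrite subr0 => h.
have -> : 2 * q%:R * eps = q%:R * (2 * eps) by ring.
by rewrite ler_pM2l ?ltr0n.
Qed.
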